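(* Let $\Omega\subseteq S^{n-1}$ be a closed set not contained in any closed hemisphere of $S^{n-1}$, let $\Psi\in\mathcal C_I\cup\mathcal C_d$, $f\in C^+(\Omega)$, $g\in C(\Omega)$, and for $|\varepsilon|$ sufficiently small let $f_\varepsilon\in C^+(\Omega)$ be defined by $\Psi(\xi,f_\varepsilon(\xi))=\Psi(\xi,f(\xi))+\varepsilon g(\xi)$, $\xi\in\Omega$. (i) For $v\in S^{n-1}\setminus\eta_{\langle f\rangle}$, letting $u_0=\alpha_{\langle f\rangle^*}(v)$, $$\lim_{\varepsilon\to0}\frac{\log h_{\langle f_\varepsilon\rangle}(v)-\log h_{\langle f\rangle}(v)}{\varepsilon}=\frac{g(u_0)}{f(u_0)\Psi_t(u_0,f(u_0))}.$$ (ii) For $\xi\in S^{n-1}\setminus\eta_{\langle 1/f\rangle}$, letting $u_1=\alpha_{[f]}(\xi)$, $$\lim_{\varepsilon\to0}\frac{\log\rho_{[f_\varepsilon]}(\xi)-\log\rho_{[f]}(\xi)}{\varepsilon}=\frac{g(u_1)}{f(u_1)\Psi_t(u_1,f(u_1))}.$$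
   Context: $S^{n-1}$ is the unit sphere of $\mathbb R^n$, $n\ge2$. $\mathscr K^n_{(o)}$ is the set of compact convex sets in $\mathbb R^n$ with the origin in their interior. For $K\in\mathscr K^n_{(o)}$: $h_K(x)=\max\{x\cdot y:y\in K\}$, $\rho_K(x)=\max\{t\ge0:tx\in K\}$, $K^*=\{x:x\cdot y\le1\ \forall y\in K\}$. $\eta_K$ is the set of $u\in S^{n-1}$ for which $\{x\in\partial K:x\cdot u=h_K(u)\}$ contains two or more points. For $\xi\in S^{n-1}$, $\pmb\alpha_K(\xi)$ is the set of outer unit normals of $K$ at $\rho_K(\xi)\xi$; for $v\notin\eta_K$ the set $\pmb\alpha_{K^*}(v)$ is a singleton, written $\{\alpha_{K^*}(v)\}$ (and, in particular, $\alpha_{\langle f\rangle^*}(v)$ for $v\notin\eta_{\langle f\rangle}$, $\alpha_{[f]}(\xi)$ for $\xi\notin\eta_{\langle1/f\rangle}$, noting $[f]=\langle 1/f\rangle^*$, are well-defined and lie in $\Omega$). $\mathcal C$ is the set of $G:S^{n-1}\times(0,\infty)\to\mathbb R$ with $G$ and $G_t=\partial G/\partial t$ continuous; $\mathcal C_I=\{G\in\mathcal C:G_t>0\}$, $\mathcal C_d=\{G\in\mathcal C:G_t<0\}$. $C(\Omega)$: continuous functions on $\Omega$; $C^+(\Omega)$: strictly positive ones. For $f\in C^+(\Omega)$: $[f]=\bigcap_{\xi\in\Omega}\{x:x\cdot\xi\le f(\xi)\}$ and $\langle f\rangle=\mathrm{conv}\{f(\xi)\xi:\xi\in\Omega\}$.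 *)

(* Defs.v *)
From HB Require Import structures.
From mathcomp Require Import all_boot all_order all_algebra.
From mathcomp Require Import all_classical all_reals all_analysis.
Set Implicit Arguments. Unset Strict Implicit. Unset Printing Implicit Defensive.
Import Order.TTheory GRing.Theory Num.Theory.
Import numFieldNormedType.Exports.
Local Open Scope classical_set_scope.
Local Open Scope ring_scope.

Section ConvexDefs.
Variables (R : realType) (n : nat).
Implicit Types (x y u : 'rV[R]_n) (K A : set 'rV[R]_n).

Definition dotv x y : R := \sum_(i < n) x ord0 i * y ord0 i.

Definition sphere : set 'rV[R]_n := [set x | dotv x x = 1].

Definition hemisphere u : set 'rV[R]_n := [set x | sphere x /\ 0 <= dotv x u].

Definition convex_s A : Prop :=
  forall x y (t : R), A x -> A y -> 0 <= t <= 1 -> A (t *: x + (1 - t) *: y).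
Definition conv A : set 'rV[R]_n :=
  [set x | forall C, convex_s C -> A `<=` C -> C x].

Definition supp_fun K x : R := sup [set dotv x y | y in K].
Definition radial_fun K x : R := sup [set t : R | 0 <= t /\ K (t *: x)].

Definition polar K : set 'rV[R]_n := [set x | forall y, K y -> dotv x y <= 1].

Definition bdry K : set 'rV[R]_n := closure K `\` interior K.

Definition eta_set K : set 'rV[R]_n :=
  [set u | sphere u /\ exists x y, x <> y /\
     bdry K x /\ dotv x u = supp_fun K u /\ bdry K y /\ dotv y u = supp_fun K u].

Definition alpha K (xi : 'rV[R]_n) : set 'rV[R]_n :=
  [set u | sphere u /\ dotv (radial_fun K xi *: xi) u = supp_fun K u].

Definition wulff (Omega : set 'rV[R]_n) (f : 'rV[R]_n -> R) : set 'rV[R]_n :=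
  [set x | forall xi, Omega xi -> dotv x xi <= f xi].
Definition chull (Omega : set 'rV[R]_n) (f : 'rV[R]_n -> R) : set 'rV[R]_n :=
  conv [set f xi *: xi | xi in Omega].

Definition Psi_t (Psi : 'rV[R]_n -> R -> R) (xi : 'rV[R]_n) (t : R) : R :=
  derive1 (Psi xi) t.

Definition in_C (Psi : 'rV[R]_n -> R -> R) : Prop :=
  (forall xi t, sphere xi -> 0 < t -> derivable (Psi xi) t 1) /\
  {within [set p : 'rV[R]_n * R | sphere p.1 /\ 0 < p.2],
     continuous (fun p => Psi p.1 p.2)} /\
  {within [set p : 'rV[R]_n * R | sphere p.1 /\ 0 < p.2],
     continuous (fun p => Psi_t Psi p.1 p.2)}.

Definition in_C_I Psi : Prop :=
  in_C Psi /\ forall xi t, sphere xi -> 0 < t -> 0 < Psi_t Psi xi t.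
Definition in_C_d Psi : Prop :=
  in_C Psi /\ forall xi t, sphere xi -> 0 < t -> Psi_t Psi xi t < 0.

Definition in_Cont (Omega : set 'rV[R]_n) (f : 'rV[R]_n -> R) : Prop :=
  {within Omega, continuous f}.
Definition in_Cpos (Omega : set 'rV[R]_n) (f : 'rV[R]_n -> R) : Prop :=
  {within Omega, continuous f} /\ forall xi, Omega xi -> 0 < f xi.

End ConvexDefs.

(* Main.v *)
Require Import Defs.
From HB Require Import structures.
From mathcomp Require Import all_boot all_order all_algebra.
From mathcomp Require Import all_classical all_reals all_analysis.
From mathcomp Require Import ring lra.
Import Order.TTheory GRing.Theory Num.Theory.
Import numFieldNormedType.Exports.
Local Open Scope classical_set_scope.
Local Open Scope ring_scope.
Set Implicit Arguments. Unset Strict Implicit. Unset Printing Implicit Defensive.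
Section Dot.
Variables (R : realType) (n : nat).
Local Notation V := 'rV[R]_n.
Implicit Types (x y z w : V).

Lemma dotvC x y : dotv x y = dotv y x.
Proof. by apply: eq_bigr => i _; rewrite mulrC. Qed.

Lemma dotvDl x y z : dotv (x + y) z = dotv x z + dotv y z.
Proof. by rewrite /dotv -big_split; apply: eq_bigr => i _; rewrite mxE mulrDl. Qed.

Lemma dotvZl (a : R) x z : dotv (a *: x) z = a * dotv x z.
Proof. by rewrite /dotv mulr_sumr; apply: eq_bigr => i _; rewrite mxE mulrA. Qed.

Lemma dotvNl x z : dotv (- x) z = - dotv x z.
Proof. by rewrite -scaleN1r dotvZl mulN1r. Qed.

Lemma dotvBl x y z : dotv (x - y) z = dotv x z - dotv y z.
Proof. by rewrite dotvDl dotvNl. Qed.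

Lemma dotvDr x y z : dotv z (x + y) = dotv z x + dotv z y.
Proof. by rewrite dotvC dotvDl !(dotvC z). Qed.

Lemma dotvZr (a : R) x z : dotv z (a *: x) = a * dotv z x.
Proof. by rewrite dotvC dotvZl dotvC. Qed.

Lemma dotvNr x z : dotv z (- x) = - dotv z x.
Proof. by rewrite dotvC dotvNl dotvC. Qed.

Lemma dotvBr x y z : dotv z (x - y) = dotv z x - dotv z y.
Proof. by rewrite dotvDr dotvNr. Qed.

Lemma dotv0l z : dotv 0 z = 0.
Proof. by rewrite /dotv big1 // => i _; rewrite mxE mul0r. Qed.

Lemma dotv_ge0 x : 0 <= dotv x x.
Proof. by apply: sumr_ge0 => i _; rewrite -expr2 sqr_ge0. Qed.

Lemma dotv_eq0 x : dotv x x = 0 -> x = 0.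
Proof.
move=> /eqP; rewrite psumr_eq0; last by move=> i _; rewrite -expr2 sqr_ge0.
move=> /allP H; apply/rowP => i; rewrite mxE.
have := H i (mem_index_enum i); rewrite -expr2 sqrf_eq0 => /eqP.
by rewrite (ord1 ord0).
Qed.

Lemma dotv_continuous y : continuous (fun x : V => dotv x y).
Proof.
rewrite /dotv.
apply: (@continuous_big _ _ +%R 0 xpredT add_continuous) => i _ x.
apply: cvgMl; first exact: nbhs_filter. exact: (@coord_continuous R 1 n ord0 i x).
Qed.

Lemma dotv_cs x u : dotv u u = 1 -> dotv x u ^+ 2 <= dotv x x.
Proof.
move=> uu.
have := dotv_ge0 (x - dotv x u *: u).
rewrite !dotvBl !dotvBr !dotvZl !dotvZr uu (dotvC u x).
rewrite mulr1 subrr subr0 subr_ge0 expr2 //.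
Qed.

End Dot.
Section Conv.
Variables (R : realType) (n : nat).
Local Notation V := 'rV[R]_n.
Implicit Types (x y z w v : V) (A : set V) (Om : set V) (h : V -> R).

Lemma conv_sub A : A `<=` Defs.conv A.
Proof. by move=> x Ax C _ HAC; exact: HAC. Qed.

Lemma halfspace_convex v (B : R) : convex_s [set x : V | dotv x v <= B].
Proof.
move=> x y t /= xB yB /andP[t0 t1].
rewrite dotvDl !dotvZl.
have -> : B = t * B + (1 - t) * B by rewrite mulrBl mul1r addrC subrK.
apply: lerD; first exact: ler_wpM2l.
by apply: ler_wpM2l => //; rewrite subr_ge0.
Qed.

Lemma conv_half A v (B : R) :
  (forall x, A x -> dotv x v <= B) -> forall x, Defs.conv A x -> dotv x v <= B.
Proof. by move=> AB x Hx; apply: (Hx [set y | dotv y v <= B]); [exact: halfspace_convex | exact: AB]. Qed.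

Lemma chull_gen Om h xi : Om xi -> chull Om h (h xi *: xi).
Proof. by move=> Oxi; apply: conv_sub; exists xi. Qed.

Lemma chull_bound Om h v (B : R) :
  (forall xi, Om xi -> h xi * dotv xi v <= B) ->
  forall y, chull Om h y -> dotv y v <= B.
Proof.
move=> HB; apply: conv_half => _ [xi Oxi <-].
by rewrite dotvZl; exact: HB.
Qed.

Lemma supp_le Om h v (B : R) xi0 : Om xi0 ->
  (forall xi, Om xi -> h xi * dotv xi v <= B) ->
  supp_fun (chull Om h) v <= B.
Proof.
move=> O0 HB; apply: ge_sup.
  by exists (dotv v (h xi0 *: xi0)), (h xi0 *: xi0) => //; exact: chull_gen.
move=> _ [y Ky <-]; rewrite dotvC; exact: chull_bound HB _ Ky.
Qed.

Lemma supp_ge Om h v (B : R) xi1 : Om xi1 ->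
  (forall xi, Om xi -> h xi * dotv xi v <= B) ->
  h xi1 * dotv xi1 v <= supp_fun (chull Om h) v.
Proof.
move=> O1 HB; apply: sup_upper_bound.
  split; first by exists (dotv v (h xi1 *: xi1)), (h xi1 *: xi1) => //; exact: chull_gen.
  exists B => _ [y Ky <-]; rewrite dotvC; exact: chull_bound HB _ Ky.
by exists (h xi1 *: xi1); [exact: chull_gen | rewrite dotvC dotvZl].
Qed.

Lemma polar_chullP Om h z :
  polar (chull Om h) z <-> forall xi, Om xi -> h xi * dotv z xi <= 1.
Proof.
split.
  by move=> Hz xi Oxi; have := Hz _ (chull_gen (h:=h) Oxi); rewrite dotvZr.
move=> Hz y Ky; rewrite dotvC.
apply: (@chull_bound Om h z 1 _ y Ky) => xi Oxi; rewrite dotvC; exact: Hz.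
Qed.

Lemma wulff_polar Om h : (forall xi, Om xi -> 0 < h xi) ->
  wulff Om h = polar (chull Om (fun x => (h x)^-1)).
Proof.
move=> hpos; apply/seteqP; split => z /=.
  move=> Hz; apply/polar_chullP => xi Oxi.
  by rewrite mulrC ler_pdivrMr ?hpos // mul1r; exact: Hz.
move=> /polar_chullP Hz xi Oxi; have := Hz xi Oxi.
by rewrite mulrC ler_pdivrMr ?hpos // mul1r.
Qed.

Lemma radial_polar_bounds Om h v (B b : R) xi1 :
  0 < b -> Om xi1 -> b <= h xi1 * dotv xi1 v ->
  (forall xi, Om xi -> h xi * dotv xi v <= B) ->
  B^-1 <= radial_fun (polar (chull Om h)) v <= b^-1.
Proof.
move=> b0 O1 b1 HB.
have B0 : 0 < B by apply: lt_le_trans b0 (le_trans b1 (HB _ O1)).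
have memS t : 0 <= t -> (forall xi, Om xi -> t * (h xi * dotv xi v) <= 1) ->
    [set t : R | 0 <= t /\ polar (chull Om h) (t *: v)] t.
  move=> t0 Ht; split => //; apply/polar_chullP => xi Oxi.
  by rewrite dotvZl mulrCA (dotvC v); exact: Ht.
have ub : ubound [set t : R | 0 <= t /\ polar (chull Om h) (t *: v)] b^-1.
  move=> t [t0 /polar_chullP Ht]; have := Ht _ O1.
  rewrite dotvZl mulrCA (dotvC v) => H.
  have tb : t * b <= 1 by apply: le_trans H; rewrite ler_wpM2l.
  by rewrite -[b^-1]mul1r ler_pdivlMr.
have ne : [set t : R | 0 <= t /\ polar (chull Om h) (t *: v)] !=set0.
  by exists 0; apply: memS => // xi _; rewrite mul0r.
apply/andP; split; last exact: ge_sup.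
apply: sup_upper_bound; first by split => //; exists b^-1.
apply: memS; first by rewrite invr_ge0 ltW.
move=> xi Oxi; rewrite -ler_pdivlMl ?invr_gt0 // invrK mulr1; exact: HB.
Qed.

End Conv.
Section Topo.
Variables (R : realType) (n : nat).
Local Notation V := 'rV[R]_n.

Definition nearJ (Om : set V) (x : V) (P : R -> V -> Prop) :=
  exists d : R, 0 < d /\ exists del : R, 0 < del /\
    forall y, Om y -> ball x d y -> forall e : R, 0 < `|e| < del -> P e y.

Definition near0 (P : R -> Prop) :=
  exists del : R, 0 < del /\ forall e : R, 0 < `|e| < del -> P e.

Lemma within_ball (Om : set V) x (P : V -> Prop) :
  within Om (nbhs x) P -> exists2 d : R, 0 < d & forall y, Om y -> ball x d y -> P y.
Proof.
move=> /nbhs_ballP [d d0 H]; exists d => // y Oy bxy; exact: H _ bxy Oy.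
Qed.

Lemma cont_eps (Om : set V) (phi : V -> R) x :
  {within Om, continuous phi} -> Om x ->
  forall eps : R, 0 < eps ->
  exists2 d : R, 0 < d & forall y, Om y -> ball x d y -> `|phi y - phi x| < eps.
Proof.
move=> /subspace_continuousP H Ox eps e0.
have /cvgrPdist_lt /(_ _ e0) := H x Ox.
move=> /within_ball [d d0 Hd]; exists d => // y Oy bxy.
by rewrite distrC; exact: Hd.
Qed.

Lemma near_cover (Om : set V) (P : R -> V -> Prop) :
  compact Om -> (forall x, Om x -> nearJ Om x P) ->
  near0 (fun e => forall y, Om y -> P e y).
Proof.
move=> /compact_near_coveringP /near_covering_withinP cov HP.
have FF : Filter ((0 : R)^') by typeclasses eauto.
have H1 : forall x, Om x ->
    \forall x' \near x & i \near (0 : R)^', Om x' -> P i x'.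
  move=> x Ox; have [d [d0 [del [del0 H]]]] := HP x Ox.
  exists (ball x d, [set e : R | 0 < `|e| < del]).
    split; first exact: nbhsx_ballx.
    apply/nbhs_ballP; exists del => //= y; rewrite /ball /= sub0r normrN => yd y0.
    by rewrite normr_gt0 y0 yd.
  by move=> [y e] [/= bxy he] Oy; exact: H.
have := cov R (0 : R)^' P FF H1.
move=> /nbhs_ballP [del del0 H]; exists del; split => // e /andP[e0 ed] y Oy.
apply: H => //; last by rewrite -normr_gt0.
by rewrite /ball /= sub0r normrN.
Qed.

Lemma lim_eps (u : R -> R) (L : R) :
  (forall eps : R, 0 < eps -> near0 (fun e => `|u e - L| <= eps)) ->
  u @ (0 : R)^' --> L.
Proof.
move=> H; apply/cvgrPdist_le => eps e0.
have [del [del0 Hd]] := H eps e0.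
apply/nbhs_ballP; exists del => //= y; rewrite /ball /= sub0r normrN => yd y0.
by rewrite distrC; apply: Hd; rewrite normr_gt0 y0 yd.
Qed.

End Topo.
Section Sph.
Variables (R : realType) (n : nat).
Local Notation V := 'rV[R]_n.

Lemma dotvv_continuous : continuous (fun x : V => dotv x x).
Proof.
rewrite /dotv.
apply: (@continuous_big _ _ +%R 0 xpredT add_continuous) => i _ x.
apply: cvgM; first exact: nbhs_filter.
  exact: (@coord_continuous R 1 n ord0 i x).
exact: (@coord_continuous R 1 n ord0 i x).
Qed.

Lemma sphere_closed : closed (@sphere R n).
Proof.
have := iffLR (continuous_closedP _) dotvv_continuous _ (@closed_eq R 1).
by [].
Qed.

Lemma sphere_coord x i : @sphere R n x -> `|x ord0 i| <= 1.
Proof.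
move=> sx.
have H : x ord0 i ^+ 2 <= 1.
  rewrite -sx /dotv (bigD1 i) //= expr2 lerDl.
  by apply: sumr_ge0 => j _; rewrite -expr2 sqr_ge0.
rewrite -(ler_pXn2r (n:=2)) // ?nnegrE //.
by rewrite expr1n real_normK ?num_real.
Qed.

Lemma sphere_compact : compact (@sphere R n).
Proof.
apply: bounded_closed_compact; last exact: sphere_closed.
exists 1; split => // M M1 x sx.
rewrite /= /Num.Def.normr /= mx_normrE.
apply: bigmax_le; first by apply: le_trans (ltW M1).
move=> [i j] _ /=; rewrite (ord1 i); apply: le_trans (ltW M1).
exact: sphere_coord.
Qed.

Lemma cont_within_dot (Om : set V) w :
  {within Om, continuous (fun x => dotv x w)}.
Proof. by apply: continuous_subspaceT; exact: dotv_continuous. Qed.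

Lemma cont_within_mul (Om : set V) (a b : V -> R) :
  {within Om, continuous a} -> {within Om, continuous b} ->
  {within Om, continuous (fun x => a x * b x)}.
Proof.
move=> /subspace_continuousP ca /subspace_continuousP cb.
apply/subspace_continuousP => x Ox.
by apply: cvgM; [exact: ca | exact: cb].
Qed.

Lemma cont_within_inv (Om : set V) (a : V -> R) :
  {within Om, continuous a} -> (forall x, Om x -> a x != 0) ->
  {within Om, continuous (fun x => (a x)^-1)}.
Proof.
move=> /subspace_continuousP ca a0.
apply/subspace_continuousP => x Ox.
by apply: cvgV; [exact: a0 | exact: ca].
Qed.

End Sph.
Section Polar.
Variables (R : realType) (n : nat).
Local Notation V := 'rV[R]_n.

Lemma sphereN (y : V) : @sphere R n y -> @sphere R n (- y).
Proof. by rewrite /sphere /= dotvNl dotvNr opprK. Qed.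

Lemma not_hemi (Om : set V) :
  ~ (exists u, @sphere R n u /\ Om `<=` hemisphere u) -> Om `<=` @sphere R n ->
  forall y, @sphere R n y -> exists xi, Om xi /\ 0 < dotv y xi.
Proof.
move=> NH Os y sy.
have [//|nex] := pselect (exists xi, Om xi /\ 0 < dotv y xi).
exfalso; apply: NH; exists (- y); split; first exact: sphereN.
move=> xi Oxi; split; first exact: Os.
rewrite dotvNr dotvC oppr_ge0 leNgt; apply/negP => H.
by apply: nex; exists xi.
Qed.

Lemma uniform_not_hemi (Om : set V) :
  ~ (exists u, @sphere R n u /\ Om `<=` hemisphere u) -> Om `<=` @sphere R n ->
  exists2 c : R, 0 < c & forall y, @sphere R n y -> exists xi, Om xi /\ c < dotv y xi.
Proof.
move=> NH Os.
have := @near_cover R n (@sphere R n)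
  (fun e y => 0 < e -> exists xi, Om xi /\ e < dotv y xi) (@sphere_compact R n).
case.
  move=> y sy; have [xi [Oxi a0]] := not_hemi NH Os sy.
  have [d d0 Hd] := cont_eps (@cont_within_dot R n (@sphere R n) xi) sy (divr_gt0 a0 (ltr0Sn R 1)).
  exists d; split => //; exists (dotv y xi / 2); split; first exact: divr_gt0.
  move=> y' sy' byy' e /andP[_ ea] e0; exists xi; split => //.
  have := Hd _ sy' byy'; rewrite ltr_norml => /andP[H _].
  rewrite gtr0_norm // in ea; apply: lt_trans ea _.
  move: H; lra.
move=> del [del0 Hdel]; exists (del / 2); first exact: divr_gt0.
move=> y sy; apply: Hdel => //; last exact: divr_gt0.
by rewrite gtr0_norm ?divr_gt0 //; apply/andP; split; lra.
Qed.

Lemma polar_bounded (Om : set V) (h : V -> R) xi1 :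
  compact Om -> Om `<=` @sphere R n ->
  ~ (exists u, @sphere R n u /\ Om `<=` hemisphere u) ->
  {within Om, continuous h} -> (forall x, Om x -> 0 < h x) -> Om xi1 ->
  exists M : R, forall z, polar (chull Om h) z -> forall u, @sphere R n u -> dotv z u <= M.
Proof.
move=> cpt Os NH ch hpos O1.
have [xm /set_mem Oxm hmin] := compact_EVT_min (ex_intro _ xi1 O1) cpt ch.
have m0 := hpos _ Oxm.
have [c c0 Hc] := uniform_not_hemi NH Os.
exists ((c * h xm)^-1) => z /polar_chullP Pz u su.
have M0 : 0 < (c * h xm)^-1 by rewrite invr_gt0 mulr_gt0.
apply: (@le_trans _ _ (Num.sqrt (dotv z z))).
  apply: le_trans (ler_norm _) _.
  rewrite -sqrtr_sqr ler_sqrt ?dotv_ge0 //; exact: dotv_cs.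
set nz := Num.sqrt (dotv z z).
have [nz0|nzpos] := eqVneq nz 0; first by rewrite nz0 ltW.
have nzp : 0 < nz by rewrite lt_def nzpos sqrtr_ge0.
have sy : @sphere R n (nz^-1 *: z).
  have zz : dotv z z = nz ^+ 2 by rewrite /nz sqr_sqrtr ?dotv_ge0.
  by rewrite /sphere /= dotvZl dotvZr zz mulrA -expr2 exprVn mulVf // expf_neq0.
have [xi [Oxi cxi]] := Hc _ sy.
rewrite dotvZl in cxi.
have Hxi := Pz _ Oxi.
have hx := hmin xi (mem_set Oxi).
have dz : c * nz < dotv z xi by rewrite -ltr_pdivlMr // mulrC.
have dz0 : 0 < dotv z xi by apply: lt_trans dz; exact: mulr_gt0.
have A1 : h xm * (c * nz) <= h xi * (c * nz).
  by apply: ler_wpM2r => //; apply: ltW; exact: mulr_gt0.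
have A2 : h xi * (c * nz) < h xi * dotv z xi by rewrite ltr_pM2l ?hpos.
have A3 : h xm * (c * nz) < 1 by apply: le_lt_trans A1 (lt_le_trans A2 Hxi).
rewrite ltW // -div1r ltr_pdivlMr ?mulr_gt0 //.
by have -> : nz * (c * h xm) = h xm * (c * nz) by ring.
Qed.

End Polar.
Section Ident.
Variables (R : realType) (n : nat).
Local Notation V := 'rV[R]_n.

Lemma bdry_support (K : set V) (v y : V) (h0 : R) :
  @sphere R n v -> K y -> dotv y v = h0 -> (forall z, K z -> dotv z v <= h0) ->
  bdry K y.
Proof.
move=> sv Ky yv Kb; split; first exact: subset_closure.
move=> /nbhs_ballP [d d0 Hd].
pose t := d / (2 * (`|v| + 1)).
have nv0 : 0 <= `|v| by [].
have t0 : 0 < t by rewrite divr_gt0 // mulr_gt0 // ltr_wpDl.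
have : K (y + t *: v).
  apply: Hd; rewrite -ball_normE /ball_ /= opprD addrA subrr sub0r normrN normrZ.
  rewrite gtr0_norm // /t mulrAC ltr_pdivrMr ?mulr_gt0 ?ltr_wpDl //. rewrite ltr_pM2l //. lra.
move=> /Kb; rewrite dotvDl dotvZl yv sv; lra.
Qed.

Lemma ident (Om : set V) (h : V -> R) (v u0 : V) :
  compact Om -> Om `<=` @sphere R n ->
  ~ (exists u, @sphere R n u /\ Om `<=` hemisphere u) ->
  {within Om, continuous h} -> (forall x, Om x -> 0 < h x) ->
  @sphere R n v -> ~ eta_set (chull Om h) v ->
  alpha (polar (chull Om h)) v u0 ->
  [/\ Om u0, 0 < h u0 * dotv u0 v &
    forall xi, Om xi -> xi <> u0 -> h xi * dotv xi v < h u0 * dotv u0 v].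
Proof.
move=> cpt Os NH ch hpos sv Neta Halpha.
set F := fun x => h x * dotv x v.
have cF : {within Om, continuous F} := cont_within_mul ch (@cont_within_dot R n Om v).
have [xa [Oxa va]] := not_hemi NH Os sv.
have [x0 /set_mem O0 Fmax] := compact_EVT_max (ex_intro _ xa Oxa) cpt cF.
have Fle : forall xi, Om xi -> F xi <= F x0 by move=> xi Oxi; exact: Fmax (mem_set Oxi).
set h0 := F x0.
have h0pos : 0 < h0.
  apply: lt_le_trans (Fle _ Oxa); rewrite /F mulr_gt0 ?hpos //; by rewrite dotvC.
set K := chull Om h.
have hK : supp_fun K v = h0.
  by apply/le_anti/andP; split; [exact: (supp_le O0 Fle) | exact: (supp_ge O0 Fle)].
have Kb : forall z, K z -> dotv z v <= h0 := chull_bound Fle.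
have sx0 : dotv x0 x0 = 1 := Os _ O0.
have uniq : forall xi, Om xi -> xi <> x0 -> F xi < h0.
  move=> xi Oxi ne; rewrite lt_def Fle // andbT; apply/eqP => Fe; apply: Neta.
  split => //; exists (h x0 *: x0), (h xi *: xi); split.
    move=> E; apply: ne.
    have sxi : dotv xi xi = 1 := Os _ Oxi.
    have hE : h x0 = h xi.
      have : dotv (h x0 *: x0) (h x0 *: x0) = dotv (h xi *: xi) (h xi *: xi) by rewrite E.
      rewrite !dotvZl !dotvZr sx0 sxi !mulr1 -!expr2 => /eqP.
      by rewrite eqrXn2 // ?ltW ?hpos // => /eqP.
    apply: (@scalerI _ _ (h x0)); first by rewrite gt_eqF ?hpos.
    by rewrite E hE.
  split.
    apply: (bdry_support (h0:=h0) sv (chull_gen (h:=h) O0) _ Kb); by rewrite dotvZl.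
  split; first by rewrite hK dotvZl.
  split; last by rewrite hK dotvZl.
  apply: (bdry_support (h0:=h0) sv (chull_gen (h:=h) Oxi) _ Kb); by rewrite dotvZl.
have rho : radial_fun (polar K) v = h0^-1.
  have := radial_polar_bounds h0pos O0 (lexx _) Fle.
  by move=> /andP[a b]; apply/le_anti/andP; split.
case: Halpha => su0; rewrite rho => Hal.
set p := h0^-1 *: v.
have [M HM] := polar_bounded cpt Os NH ch hpos O0.
have supb : forall z, polar K z -> dotv z u0 <= dotv p u0.
  move=> z Pz; rewrite Hal; apply: sup_upper_bound.
    split; first by exists (dotv u0 z), z.
    by exists M => _ [z' Pz' <-]; rewrite dotvC; exact: HM.
  by exists z => //; rewrite dotvC.
have expand : forall (e : R) w y,
    h y * dotv (p + e *: w) y = h0^-1 * F y + e * (h y * dotv y w).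
  by move=> e w y; rewrite /F dotvDl !dotvZl (dotvC v) (dotvC w); ring.
have key : forall w, dotv w x0 < 0 -> dotv w u0 <= 0.
  move=> w wneg; rewrite leNgt; apply/negP => wpos.
  pose G := fun y => h y * dotv y w.
  have cG : {within Om, continuous G} := cont_within_mul ch (@cont_within_dot R n Om w).
  have NC := @near_cover R n Om (fun e y => 0 < e -> h y * dotv (p + e *: w) y <= 1) cpt.
  have [del [del0 Hdel]] : near0 (fun e => forall y, Om y -> 0 < e ->
       h y * dotv (p + e *: w) y <= 1).
    apply: NC => x Ox.
    have [->|nex] := eqVneq x x0.
      have ew : 0 < - dotv x0 w by rewrite oppr_gt0 dotvC.
      have [d d0 Hd] := cont_eps (@cont_within_dot R n Om w) O0 ew.
      exists d; split => //; exists 1; split => // y Oy bxy e _ e0.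
      have : dotv y w < 0.
        have := Hd _ Oy bxy; rewrite ltr_norml => /andP[_]; lra.
      move=> yw.
      rewrite expand -[1]addr0; apply: lerD.
        rewrite -(ler_pM2l h0pos) mulrA mulrV ?unitfE ?gt_eqF // mul1r mulr1.
        exact: Fle.
      by rewrite pmulr_rle0 // pmulr_rle0 ?hpos // ltW.
    have Fx : F x < h0 by apply: uniq => //; apply/eqP.
    set gap := h0 - F x.
    have gap0 : 0 < gap by rewrite subr_gt0.
    have [d1 d10 Hd1] := cont_eps cF Ox (divr_gt0 gap0 (ltr0Sn R 1)).
    have [d2 d20 Hd2] := cont_eps cG Ox ltr01.
    set MG := `|G x| + 1.
    have MG0 : 0 < MG by rewrite ltr_wpDl.
    exists (Num.min d1 d2); split; first by rewrite lt_min d10 d20.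
    exists (gap / (2 * h0 * MG)); split.
      by apply: divr_gt0 => //; apply: mulr_gt0 => //; exact: mulr_gt0.
    move=> y Oy bxy e /andP[_ ed] e0.
    have b1 : ball x d1 y by apply: le_ball bxy; rewrite ge_min lexx.
    have b2 : ball x d2 y by apply: le_ball bxy; rewrite ge_min lexx orbT.
    have Fy : F y <= h0 - gap / 2.
      have := Hd1 _ Oy b1; rewrite ltr_norml => /andP[_]; rewrite /gap; lra.
    have Gy : G y <= MG.
      have := Hd2 _ Oy b2; rewrite ltr_norml => /andP[_] H.
      rewrite /MG; have := ler_norm (G x); lra.
    rewrite gtr0_norm // in ed.
    rewrite expand.
    have s1 : h0^-1 * F y <= 1 - gap / (2 * h0).
      apply: le_trans (_ : h0^-1 * (h0 - gap / 2) <= _).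
        by rewrite ler_pM2l // invr_gt0.
      rewrite le_eqVlt; apply/orP; left; apply/eqP; field.
      by rewrite gt_eqF.
    have s2 : e * G y <= gap / (2 * h0).
      apply: le_trans (_ : e * MG <= _); first by rewrite ler_wpM2l // ltW.
      apply: le_trans (_ : gap / (2 * h0 * MG) * MG <= _).
        by rewrite ler_wpM2r // ltW.
      rewrite le_eqVlt; apply/orP; left; apply/eqP; field.
      by rewrite !gt_eqF.
    rewrite /G in s2; lra.
  have s0 : 0 < del / 2 by rewrite divr_gt0.
  have Ps : polar K (p + (del / 2) *: w).
    apply/polar_chullP => y Oy; apply: Hdel => //.
    rewrite gtr0_norm // s0 /=; lra.
  have := supb _ Ps; rewrite dotvDl dotvZl -lerBrDl subrr pmulr_rle0 //.
  by rewrite leNgt wpos.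
set c := dotv u0 x0.
have c0 : 0 <= c.
  have := key (- x0); rewrite !dotvNl sx0 oppr_lt0 ltr01 => /(_ isT).
  by rewrite oppr_le0 /c dotvC.
have c1 : c <= 1.
  have := dotv_cs u0 sx0; rewrite su0 -/c => H; nra.
have c_ge1 : 1 <= c.
  rewrite leNgt; apply/negP => cl1.
  set t := (1 - c ^+ 2) / 2.
  have t0 : 0 < t by rewrite /t divr_gt0 //; nra.
  have := key (u0 - (c + t) *: x0).
  rewrite !dotvBl !dotvZl sx0 -/c (dotvC x0 u0) -/c su0.
  have -> : c - (c + t) * 1 = - t by ring.
  rewrite oppr_lt0 t0 => /(_ isT).
  have H1 : 0 < 1 - c ^+ 2 by nra.
  have H2 : 0 < 1 - c / 2 by lra.
  have := mulr_gt0 H1 H2; rewrite /t; nra.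
have ceq : c = 1 by apply/le_anti/andP.
have u0x0 : u0 = x0.
  apply/eqP; rewrite -subr_eq0; apply/eqP/dotv_eq0.
  rewrite !dotvBl !dotvBr su0 sx0 (dotvC x0 u0) -/c ceq; lra.
rewrite u0x0; split; [exact: O0 | exact: h0pos | move=> xi Oxi ne; exact: uniq].
Qed.

End Ident.
Section Core.
Variables (R : realType) (n : nat).
Local Notation V := 'rV[R]_n.

Lemma ln_le_exp (a b X : R) : 0 < a -> 0 < b -> ln a <= ln b + X -> a <= b * expR X.
Proof.
move=> a0 b0 H; rewrite -(lnK (x:=a)) ?posrE // -(lnK (x:=b)) ?posrE //.
by rewrite -expRD ler_expR.
Qed.

Lemma ln_ge_exp (a b X : R) : 0 < a -> 0 < b -> ln b + X <= ln a -> b * expR X <= a.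
Proof.
move=> a0 b0 H; rewrite -(lnK (x:=a)) ?posrE // -{1}(lnK (x:=b)) ?posrE //.
by rewrite -expRD ler_expR.
Qed.

Lemma D_bound (la lb e L eps : R) : e != 0 -> `|(la - lb) / e - L| <= eps ->
  la <= lb + (e * L + `|e| * eps) /\ lb + (e * L - `|e| * eps) <= la.
Proof.
move=> e0 H.
have E : la - lb - e * L = e * ((la - lb) / e - L) by field.
have : `|la - lb - e * L| <= `|e| * eps by rewrite E normrM ler_wpM2l.
rewrite ler_norml => /andP[H1 H2]; split; lra.
Qed.

Lemma ln_ratio (H h0 e L eps : R) : 0 < H -> 0 < h0 -> e != 0 ->
  h0 * expR (e * L - `|e| * eps) <= H -> H <= h0 * expR (e * L + `|e| * eps) ->
  `|(ln H - ln h0) / e - L| <= eps.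
Proof.
move=> H0 h00 e0 lo hi.
have l1 : ln H <= ln h0 + (e * L + `|e| * eps).
  by move: hi; rewrite -ler_ln ?posrE ?mulr_gt0 ?expR_gt0 // lnM ?posrE ?expR_gt0 // expRK.
have l2 : ln h0 + (e * L - `|e| * eps) <= ln H.
  by move: lo; rewrite -ler_ln ?posrE ?mulr_gt0 ?expR_gt0 // lnM ?posrE ?expR_gt0 // expRK.
have E : (ln H - ln h0) / e - L = (ln H - ln h0 - e * L) / e by field.
rewrite E normrM normfV ler_pdivrMr ?normr_gt0 // mulrC.
rewrite ler_norml; apply/andP; split; lra.
Qed.

Definition Dq (he : R -> V -> R) (h : V -> R) (e : R) (y : V) :=
  (ln (he e y) - ln (h y)) / e.

Lemma core (Om : set V) (h : V -> R) (he : R -> V -> R) (L : V -> R) (v x0 : V) :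
  compact Om -> {within Om, continuous h} -> (forall x, Om x -> 0 < h x) ->
  near0 (fun e => forall y, Om y -> 0 < he e y) ->
  Om x0 -> 0 < h x0 * dotv x0 v ->
  (forall xi, Om xi -> xi <> x0 -> h xi * dotv xi v < h x0 * dotv x0 v) ->
  (forall x, Om x -> forall eps : R, 0 < eps ->
      nearJ Om x (fun e y => `|Dq he h e y - L x| <= eps)) ->
  forall eps : R, 0 < eps -> near0 (fun e =>
    (forall y, Om y -> he e y * dotv y v <= h x0 * dotv x0 v * expR (e * L x0 + `|e| * eps)) /\
    h x0 * dotv x0 v * expR (e * L x0 - `|e| * eps) <= he e x0 * dotv x0 v).
Proof.
move=> cpt ch hpos [dp [dp0 Hp]] O0 h0pos uniq JL eps eps0.
set F := fun x => h x * dotv x v.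
set h0 := F x0.
have h0p : 0 < h0 := h0pos.
clear h0pos; rename h0p into h0pos.
set L0 := L x0.
have cF : {within Om, continuous F} := cont_within_mul ch (@cont_within_dot R n Om v).
have Fle : forall y, Om y -> F y <= h0.
  move=> y Oy; have [->|ne] := eqVneq y x0; first exact: lexx.
  by apply: ltW; apply: uniq => //; apply/eqP.
have [du [du0 Hu]] : near0 (fun e => forall y, Om y ->
    he e y * dotv y v <= h0 * expR (e * L0 + `|e| * eps)).
  apply: near_cover => // x Ox.
  have [->|nex] := eqVneq x x0.
    have [d [d0 [del [del0 Hd]]]] := JL _ O0 _ eps0.
    exists d; split => //; exists (Num.min del dp); split; first by rewrite lt_min del0 dp0.
    move=> y Oy bxy e /andP[e0 edel].
    have [edl edp] : `|e| < del /\ `|e| < dp by move: edel; rewrite lt_min => /andP[].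
    have hey : 0 < he e y by apply: Hp => //; rewrite e0 edp.
    have [dy|dy] := leP (dotv y v) 0.
      apply: le_trans (_ : 0 <= _); last by rewrite mulr_ge0 ?ltW ?expR_gt0.
      by rewrite pmulr_rle0.
    have := Hd _ Oy bxy e; rewrite e0 edl => /(_ isT).
    move=> /(D_bound _); rewrite -normr_gt0 e0 => /(_ isT) [D1 _].
    have := ln_le_exp hey (hpos _ Oy) D1 => B.
    apply: le_trans (_ : h y * expR (e * L0 + `|e| * eps) * dotv y v <= _).
      by rewrite ler_pM2r.
    rewrite mulrAC ler_pM2r ?expR_gt0 //; exact: Fle.
  have Fx : F x < h0 by apply: uniq => //; apply/eqP.
  set m := h0 / 2 + Num.max (F x) 0 / 2.
  have m0 : 0 < m.
    rewrite /m; have : 0 <= Num.max (F x) 0 by rewrite le_max lexx orbT.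
    lra.
  have mh : m < h0.
    rewrite /m; have : Num.max (F x) 0 < h0 by rewrite gt_max Fx h0pos.
    lra.
  have Fm : F x < m.
    rewrite /m; have : F x <= Num.max (F x) 0 by rewrite le_max lexx.
    lra.
  have Fm' : 0 < m - F x by rewrite subr_gt0.
  have [d1 d10 Hd1] := cont_eps cF Ox Fm'.
  have [d2 [d20 [del2 [del20 Hd2]]]] := JL _ Ox _ ltr01.
  set A := `|L x| + 1.
  set C := A + `|L0|.
  have C0 : 0 <= C by rewrite /C /A; have := normr_ge0 (L x); have := normr_ge0 L0; lra.
  set q := h0 / m.
  have q0 : 0 < q by rewrite divr_gt0.
  have q1 : 1 < q by rewrite /q ltr_pdivlMr // mul1r.
  have lq : 0 < ln q := ln_gt0 q1.
  set del3 := ln q / (C + 1).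
  have del30 : 0 < del3 by rewrite divr_gt0 // ltr_wpDl.
  exists (Num.min d1 d2); split; first by rewrite lt_min d10 d20.
  exists (Num.min del2 (Num.min dp del3)); split.
    by rewrite !lt_min del20 dp0 del30.
  move=> y Oy bxy e /andP[e0 edel].
  have b1 : ball x d1 y by apply: le_ball bxy; rewrite ge_min lexx.
  have b2 : ball x d2 y by apply: le_ball bxy; rewrite ge_min lexx orbT.
  move: edel; rewrite !lt_min => /and3P[edl2 edp edl3].
  have hey : 0 < he e y by apply: Hp => //; rewrite e0 edp.
  have [dy|dy] := leP (dotv y v) 0.
    apply: le_trans (_ : 0 <= _); last by rewrite mulr_ge0 ?ltW ?expR_gt0.
    by rewrite pmulr_rle0.
  have Fy : F y < m.
    have := Hd1 _ Oy b1; rewrite ltr_norml => /andP[_]; lra.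
  have := Hd2 _ Oy b2 e; rewrite e0 edl2 => /(_ isT).
  move=> /(D_bound _); rewrite -normr_gt0 e0 => /(_ isT) [D1 _].
  have eLx : e * L x <= `|e| * `|L x| by rewrite -normrM ler_norm.
  have D1' : ln (he e y) <= ln (h y) + `|e| * A.
    apply: le_trans D1 _; rewrite lerD2l /A mulrDr mulr1; lra.
  have B := ln_le_exp hey (hpos _ Oy) D1'.
  have eC : `|e| * C <= ln q.
    apply: le_trans (_ : del3 * (C + 1) <= _).
      apply: le_trans (_ : `|e| * (C + 1) <= _).
        by rewrite ler_wpM2l // lerDl.
      by apply: ler_wpM2r; [rewrite addr_ge0 | exact: ltW].
    by rewrite /del3 mulfVK // gt_eqF // ltr_wpDl.
  have X1 : expR (`|e| * A) <= q * expR (- (`|e| * `|L0|)).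
    have -> : `|e| * A = `|e| * C + - (`|e| * `|L0|).
      rewrite /C /A !mulrDr; lra.
    rewrite expRD; apply: ler_wpM2r; first exact: ltW (expR_gt0 _).
    by rewrite -(lnK (x:=q)) ?posrE // ler_expR.
  have X2 : - (`|e| * `|L0|) <= e * L0 + `|e| * eps.
    have : - (`|e| * `|L0|) <= e * L0 by rewrite -normrM lerNl -mulNr ler_normr orbC -mulNr lexx.
    have : 0 <= `|e| * eps by rewrite mulr_ge0 // ltW.
    lra.
  apply: le_trans (_ : h y * expR (`|e| * A) * dotv y v <= _); first by rewrite ler_pM2r.
  rewrite mulrAC -/(F y).
  apply: le_trans (_ : m * expR (`|e| * A) <= _); first by rewrite ler_pM2r ?expR_gt0 // ltW.
  apply: le_trans (_ : m * (q * expR (- (`|e| * `|L0|))) <= _); first by rewrite ler_pM2l.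
  rewrite mulrA /q mulrCA divff ?gt_eqF // mulr1.
  by rewrite ler_pM2l // ler_expR.
have [d [d0 [del [del0 Hd]]]] := JL _ O0 _ eps0.
exists (Num.min du (Num.min del dp)); split; first by rewrite !lt_min du0 del0 dp0.
move=> e /andP[e0]; rewrite !lt_min => /and3P[edu edl edp]; split.
  by move=> y Oy; apply: Hu => //; rewrite e0 edu.
have hex : 0 < he e x0 by apply: Hp => //; rewrite e0 edp.
have := Hd _ O0 (ballxx _ d0) e; rewrite e0 edl => /(_ isT).
move=> /(D_bound _); rewrite -normr_gt0 e0 => /(_ isT) [_ D2].
have B := ln_ge_exp hex (hpos _ O0) D2.
have dx0 : 0 < dotv x0 v by move: h0pos; rewrite pmulr_rgt0 ?hpos.
rewrite -/h0 /h0 /F mulrAC ler_pM2r //.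
Qed.

End Core.
Section AnaHelpers.
Variables (R : realType) (n : nat).
Local Notation V := 'rV[R]_n.

Lemma ln_diff_le (a b : R) : 0 < a -> 0 < b -> ln b - ln a <= (b - a) / a.
Proof.
move=> a0 b0.
have -> : ln b - ln a = ln (b / a).
  by rewrite lnM ?posrE ?invr_gt0 // lnV ?posrE.
have -> : b / a = 1 + (b - a) / a by field; rewrite gt_eqF.
apply: le_ln1Dx.
have -> : (b - a) / a = b / a - 1 by field; rewrite gt_eqF.
have := divr_gt0 b0 a0; lra.
Qed.

Lemma between_eps (u w k rho z : R) :
  `|u - k| < rho -> `|w - k| < rho -> (u <= z <= w \/ w <= z <= u) -> `|z - k| < rho.
Proof.
rewrite !ltr_norml => /andP[u1 u2] /andP[w1 w2] [/andP[z1 z2]|/andP[z1 z2]];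
  apply/andP; split; lra.
Qed.

Lemma ln_kappa (a b k rho : R) : 0 < a -> 0 < b ->
  `|a^-1 - k| < rho -> `|b^-1 - k| < rho ->
  exists kappa, `|kappa - k| < rho /\ ln b - ln a = kappa * (b - a).
Proof.
move=> a0 b0 ha hb.
have [->|neq] := eqVneq a b; first by exists b^-1; split => //; rewrite !subrr mulr0.
have l1 := ln_diff_le a0 b0.
have l2 := ln_diff_le b0 a0.
exists ((ln b - ln a) / (b - a)); split; last by rewrite mulfVK // subr_eq0 eq_sym.
apply: (between_eps ha hb).
have E1 : (a - b) / b = - ((b - a) / b) by ring.
have E2 : (a - b) / a = - ((b - a) / a) by ring.
rewrite E1 in l2.
have [ab|ba] := ltP a b.
  have ba0 : 0 < b - a by rewrite subr_gt0.
  right; apply/andP; split.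
    rewrite ler_pdivlMr // mulrC; lra.
  by rewrite ler_pdivrMr // mulrC.
have ab0 : 0 < a - b by rewrite subr_gt0 lt_neqAle ba andbT eq_sym.
have -> : (ln b - ln a) / (b - a) = (ln a - ln b) / (a - b).
  by rewrite -[ln b - ln a]opprB -[b - a]opprB invrN mulrNN.
left; apply/andP; split.
  rewrite ler_pdivlMr // mulrC E2; lra.
rewrite ler_pdivrMr // mulrC E1; lra.
Qed.

End AnaHelpers.
Section AnaHelpers2.
Variables (R : realType) (n : nat).
Local Notation V := 'rV[R]_n.

Lemma cont_at_eps (phi : R -> R) (t : R) : phi @ t --> phi t ->
  forall eps : R, 0 < eps -> exists2 rho : R, 0 < rho &
    forall t', `|t' - t| < rho -> `|phi t' - phi t| < eps.
Proof.
move=> H eps e0; have /cvgrPdist_lt /(_ _ e0) /nbhs_ballP [rho r0 Hr] := H.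
exists rho => // t' tt'; rewrite distrC; apply: Hr.
by rewrite /ball /= distrC.
Qed.

Lemma inv_eps (p : R) : p != 0 -> forall eps : R, 0 < eps ->
  exists2 rho : R, 0 < rho & forall p', `|p' - p| < rho -> `|p'^-1 - p^-1| < eps.
Proof.
move=> p0; apply: (@cont_at_eps (fun q => q^-1)).
exact: cvgV.
Qed.

Lemma mul_eps (a b : R) (eps : R) : 0 < eps ->
  exists2 rho : R, 0 < rho & forall a' b', `|a' - a| < rho -> `|b' - b| < rho ->
    `|a' * b' - a * b| < eps.
Proof.
move=> e0.
set rho := Num.min 1 (eps / (`|a| + `|b| + 1)).
have D0 : 0 < `|a| + `|b| + 1 by rewrite ltr_wpDl // addr_ge0.
have r0 : 0 < rho by rewrite lt_min ltr01 divr_gt0.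
exists rho => // a' b' ha hb.
have E : a' * b' - a * b = (a' - a) * (b' - b) + (a' - a) * b + a * (b' - b) by ring.
rewrite E.
set x := `|a' - a| in ha *; set y := `|b' - b| in hb *.
have r1 : rho <= 1 by rewrite ge_min lexx.
have r2 : rho * (`|a| + `|b| + 1) <= eps.
  by rewrite -ler_pdivlMr // ge_min lexx orbT.
apply: le_lt_trans (ler_normD _ _) _.
apply: le_lt_trans (lerD (ler_normD _ _) (lexx _)) _.
rewrite !normrM -/x -/y.
have x0 : 0 <= x := normr_ge0 _. have y0 : 0 <= y := normr_ge0 _.
have na : 0 <= `|a| := normr_ge0 _. have nb : 0 <= `|b| := normr_ge0 _.
nra.
Qed.

Lemma joint_eps (Phi : V * R -> R) (x : V) (t : R) :
  {within [set p : V * R | @sphere R n p.1 /\ 0 < p.2], continuous Phi} ->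
  @sphere R n x -> 0 < t -> forall eta : R, 0 < eta ->
  exists d : R, 0 < d /\ exists r : R, 0 < r /\
    forall y t', @sphere R n y -> 0 < t' -> ball x d y -> `|t' - t| < r ->
      `|Phi (y, t') - Phi (x, t)| < eta.
Proof.
move=> /subspace_continuousP H sx t0 eta eta0.
have := H (x, t) (conj sx t0).
move=> /cvgrPdist_lt /(_ _ eta0) [[A B] [/= nA nB] sub].
have [d d0 Hd] := iffLR (nbhs_ballP _ _) nA.
have [r r0 Hr] := iffLR (nbhs_ballP _ _) nB.
exists d; split => //; exists r; split => // y t' sy t'0 bxy tt'.
rewrite distrC; apply: (sub (y, t')) => //=; split.
  exact: Hd.
by apply: Hr; rewrite /ball /= distrC.
Qed.

Lemma mvt_psi (Psi : V -> R -> R) (y : V) (a b : R) :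
  (forall t, 0 < t -> derivable (Psi y) t 1) -> 0 < a -> a < b ->
  exists c, a < c < b /\ Psi y b - Psi y a = Psi_t Psi y c * (b - a).
Proof.
move=> Hd a0 ab.
have := @MVT R (Psi y) (Psi_t Psi y) a b ab.
case.
- move=> c; rewrite in_itv /= => /andP[ac cb].
  rewrite /Psi_t derive1E; apply: derivableP; apply: Hd.
  exact: lt_trans ac.
- apply: derivable_within_continuous => c; rewrite in_itv /= => /andP[ac cb].
  by apply: Hd; apply: lt_le_trans ac.
- move=> c; rewrite in_itv /= => /andP[ac cb] E.
  by exists c; rewrite ac cb.
Qed.

Lemma mvt_near (Psi : V -> R -> R) (y : V) (a b t1 r : R) :
  (forall t, 0 < t -> derivable (Psi y) t 1) -> 0 < a -> 0 < b ->
  `|a - t1| < r -> `|b - t1| < r ->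
  exists c, [/\ `|c - t1| < r, 0 < c & Psi y b - Psi y a = Psi_t Psi y c * (b - a)].
Proof.
move=> Hd a0 b0 ha hb.
have [->|neq] := eqVneq a b; first by exists b; split => //; rewrite !subrr mulr0.
have [ab|ba] := ltP a b.
  have [c [/andP[ac cb] E]] := mvt_psi Hd a0 ab.
  exists c; split => //; last exact: lt_trans ac.
  by apply: (between_eps ha hb); left; rewrite !ltW.
have ba' : b < a by rewrite lt_neqAle ba andbT eq_sym.
have [c [/andP[bc ca] E]] := mvt_psi Hd b0 ba'.
exists c; split.
- by apply: (between_eps ha hb); right; rewrite !ltW.
- exact: lt_trans bc.
- by rewrite -opprB E -mulrN opprB.
Qed.

End AnaHelpers2.
Section Analytic.
Variables (R : realType) (n : nat).
Local Notation V := 'rV[R]_n.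

Lemma fe_near (Om : set V) (Psi : V -> R -> R) (f g : V -> R) (fe : R -> V -> R)
    (s : R) (x : V) (d0 : R) (r : R) :
  Om `<=` @sphere R n ->
  {within [set p : V * R | @sphere R n p.1 /\ 0 < p.2], continuous (fun p => Psi p.1 p.2)} ->
  (forall y, @sphere R n y -> forall a b, 0 < a -> a < b -> s * Psi y a < s * Psi y b) ->
  (forall X : R, `|s * X| = `|X|) ->
  {within Om, continuous f} -> (forall y, Om y -> 0 < f y) -> {within Om, continuous g} ->
  0 < d0 ->
  (forall e : R, `|e| < d0 -> (forall y, Om y -> 0 < fe e y) /\
       forall y, Om y -> Psi y (fe e y) = Psi y (f y) + e * g y) ->
  Om x -> 0 < r -> r < f x ->
  exists d : R, 0 < d /\ exists del : R, 0 < del /\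
    forall y, Om y -> ball x d y -> forall e : R, `|e| < del -> `|fe e y - f x| < r.
Proof.
move=> Os cPsi mono sabs cf fpos cg d00 Hd0 Ox r0 rt.
set t1 := f x.
have sx := Os _ Ox.
set a := t1 - r. set b := t1 + r.
have a0 : 0 < a by rewrite /a subr_gt0.
have t10 : 0 < t1 := fpos _ Ox.
have b0 : 0 < b by rewrite /b addr_gt0.
have g1 : 0 < s * Psi x b - s * Psi x t1.
  by rewrite subr_gt0; apply: mono => //; rewrite /b ltrDl.
have g2 : 0 < s * Psi x t1 - s * Psi x a.
  by rewrite subr_gt0; apply: mono => //; rewrite /a gtrDl oppr_lt0.
set gam := Num.min (s * Psi x b - s * Psi x t1) (s * Psi x t1 - s * Psi x a) / 4.
have gam0 : 0 < gam by rewrite divr_gt0 // lt_min g1 g2.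
have gam1 : 4 * gam <= s * Psi x b - s * Psi x t1.
  by rewrite /gam mulrC divfK ?pnatr_eq0 // ge_min lexx.
have gam2 : 4 * gam <= s * Psi x t1 - s * Psi x a.
  by rewrite /gam mulrC divfK ?pnatr_eq0 // ge_min lexx orbT.
have [d1 [d10 [r1 [r10 H1]]]] := joint_eps cPsi sx b0 gam0.
have [d2 [d20 [r2 [r20 H2]]]] := joint_eps cPsi sx a0 gam0.
have [d3 [d30 [r3 [r30 H3]]]] := joint_eps cPsi sx t10 gam0.
have [d4 d40 H4] := cont_eps cf Ox r30.
have [d5 d50 H5] := cont_eps cg Ox ltr01.
set G := `|g x| + 1.
have G0 : 0 < G by rewrite ltr_wpDl.
exists (Num.min d1 (Num.min d2 (Num.min d3 (Num.min d4 d5)))); split.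
  by rewrite !lt_min d10 d20 d30 d40 d50.
exists (Num.min d0 (gam / G)); split; first by rewrite lt_min d00 divr_gt0.
move=> y Oy bxy e; rewrite lt_min => /andP[ed0 edg].
have sy := Os _ Oy.
have bl : forall dd, Num.min d1 (Num.min d2 (Num.min d3 (Num.min d4 d5))) <= dd ->
    ball x dd y by move=> dd H; apply: (le_ball H); exact: bxy.
have b1 : ball x d1 y by apply: bl; rewrite !ge_min lexx ?orbT.
have b2 : ball x d2 y by apply: bl; rewrite !ge_min lexx ?orbT.
have b3 : ball x d3 y by apply: bl; rewrite !ge_min lexx ?orbT.
have b4 : ball x d4 y by apply: bl; rewrite !ge_min lexx ?orbT.
have b5 : ball x d5 y by apply: bl; rewrite !ge_min lexx ?orbT.
have hb : `|Psi y b - Psi x b| < gam by apply: (H1 y b) => //; rewrite subrr normr0.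
have ha : `|Psi y a - Psi x a| < gam by apply: (H2 y a) => //; rewrite subrr normr0.
have fy : `|f y - t1| < r3 := H4 y Oy b4.
have hf : `|Psi y (f y) - Psi x t1| < gam by apply: (H3 y (f y)) => //; exact: fpos.
have gy : `|g y - g x| < 1 := H5 y Oy b5.
have [fepos Heq] := Hd0 e ed0.
have gyG : `|g y| <= G.
  have -> : g y = g x + (g y - g x) by ring.
  apply: le_trans (ler_normD _ _) _; rewrite /G lerD2l; exact: ltW.
have eg : `|e * g y| < gam.
  rewrite normrM; apply: le_lt_trans (ler_wpM2l (normr_ge0 e) gyG) _.
  by rewrite -ltr_pdivlMr.
set F := fe e y.
have F0 : 0 < F := fepos y Oy.
have E : Psi y F = Psi y (f y) + e * g y := Heq y Oy.
have cb : `|s * Psi y b - s * Psi x b| < gam by rewrite -mulrBr sabs.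
have ca : `|s * Psi y a - s * Psi x a| < gam by rewrite -mulrBr sabs.
have cf' : `|s * Psi y (f y) - s * Psi x t1| < gam by rewrite -mulrBr sabs.
have ce : `|s * (e * g y)| < gam by rewrite sabs.
have sE : s * Psi y F = s * Psi y (f y) + s * (e * g y) by rewrite E mulrDr.
move: cb ca cf' ce; rewrite !ltr_norml => /andP[cb1 cb2] /andP[ca1 ca2] /andP[cf1 cf2] /andP[ce1 ce2].
have Fb : F < b.
  rewrite ltNge; apply/negP => bF.
  have : s * Psi y b <= s * Psi y F.
    have [Feq|Fne] := eqVneq F b; first by rewrite Feq.
    apply: ltW; apply: mono => //; by rewrite lt_neqAle eq_sym Fne bF.
  lra.
have aF : a < F.
  rewrite ltNge; apply/negP => Fa.
  have : s * Psi y F <= s * Psi y a.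
    have [Feq|Fne] := eqVneq F a; first by rewrite Feq.
    apply: ltW; apply: mono => //; by rewrite lt_neqAle Fne Fa.
  lra.
apply/andP; split; rewrite /a /b in aF Fb; lra.
Qed.

Lemma analytic (Om : set V) (Psi : V -> R -> R) (f g : V -> R) (fe : R -> V -> R) :
  Om `<=` @sphere R n -> in_C_I Psi \/ in_C_d Psi ->
  in_Cpos Om f -> in_Cont Om g ->
  (exists delta : R, 0 < delta /\
     forall e : R, `|e| < delta ->
       in_Cpos Om (fe e) /\
       forall xi, Om xi -> Psi xi (fe e xi) = Psi xi (f xi) + e * g xi) ->
  forall x, Om x -> forall eps : R, 0 < eps ->
    nearJ Om x (fun e y => `|Dq fe f e y - g x / (f x * Psi_t Psi x (f x))| <= eps).
Proof.
move=> Os HPsi [cf fpos] cg [d0 [d00 Hd0]] x Ox eps eps0.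
have [[Hder [cPsi cPsit]] [s [s1 Hs]]] : in_C Psi /\ exists s : R, (s = 1 \/ s = -1) /\
    (forall xi t, @sphere R n xi -> 0 < t -> 0 < s * Psi_t Psi xi t).
  case: HPsi => [[HC H]|[HC H]]; split => //.
    by exists 1; split; [left | move=> xi t sxi t0; rewrite mul1r; exact: H].
  by exists (-1); split; [right | move=> xi t sxi t0; rewrite mulN1r oppr_gt0; exact: H].
have sabs : forall X : R, `|s * X| = `|X|.
  by move=> X; case: s1 => ->; rewrite ?mul1r ?mulN1r ?normrN.
have mono : forall y, @sphere R n y -> forall a b, 0 < a -> a < b ->
    s * Psi y a < s * Psi y b.
  move=> y sy a b a0 ab.
  have [c [/andP[ac cb] E]] := mvt_psi (fun t t0 => Hder y t sy t0) a0 ab.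
  rewrite -subr_gt0 -mulrBr E mulrA mulr_gt0 ?subr_gt0 //.
  apply: Hs => //; exact: lt_trans ac.
have Hd0' : forall e : R, `|e| < d0 -> (forall y, Om y -> 0 < fe e y) /\
    forall y, Om y -> Psi y (fe e y) = Psi y (f y) + e * g y.
  by move=> e ed; have [[_ H] H'] := Hd0 e ed.
have sx := Os _ Ox.
set t1 := f x.
have t10 : 0 < t1 := fpos _ Ox.
set P1 := Psi_t Psi x t1.
have P10 : P1 != 0.
  by apply/eqP => P0; have := Hs x t1 sx t10; rewrite -/P1 P0 mulr0 ltxx.
have [rho1 rho10 Hrho1] := mul_eps (t1^-1) (g x * P1^-1) eps0.
have [rho2 rho20 Hrho2] := mul_eps (g x) (P1^-1) rho10.
have [rho3 rho30 Hrho3] := inv_eps P10 rho20.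
have [da [da0 [ra [ra0 Ha]]]] := joint_eps cPsit sx t10 rho30.
have [rho4 rho40 Hrho4] := inv_eps (lt0r_neq0 t10) rho10.
have [dg dg0 Hg] := cont_eps cg Ox rho20.
set rs := Num.min ra (Num.min rho4 (t1 / 2)).
have rs0 : 0 < rs by rewrite !lt_min ra0 rho40 divr_gt0.
have rst : rs < t1.
  apply: le_lt_trans (_ : t1 / 2 < _); first by rewrite !ge_min lexx !orbT.
  lra.
have [df df0 Hf] := cont_eps cf Ox rs0.
have [dC [dC0 [delC [delC0 HC]]]] := fe_near Os cPsi mono sabs cf fpos cg d00 Hd0' Ox rs0 rst.
exists (Num.min da (Num.min dg (Num.min df dC))); split.
  by rewrite !lt_min da0 dg0 df0 dC0.
exists (Num.min delC d0); split; first by rewrite lt_min delC0 d00.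
move=> y Oy bxy e /andP[e0]; rewrite lt_min => /andP[edC ed0].
have bl : forall dd, Num.min da (Num.min dg (Num.min df dC)) <= dd ->
    ball x dd y by move=> dd H; apply: (le_ball H); exact: bxy.
have ba : ball x da y by apply: bl; rewrite !ge_min lexx ?orbT.
have bg : ball x dg y by apply: bl; rewrite !ge_min lexx ?orbT.
have bf : ball x df y by apply: bl; rewrite !ge_min lexx ?orbT.
have bC : ball x dC y by apply: bl; rewrite !ge_min lexx ?orbT.
have sy := Os _ Oy.
have [fepos Heq] := Hd0' e ed0.
set a := f y. set b := fe e y.
have a0 : 0 < a := fpos _ Oy.
have b0 : 0 < b := fepos _ Oy.
have ha : `|a - t1| < rs := Hf _ Oy bf.
have hb : `|b - t1| < rs := HC _ Oy bC _ edC.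
have rsa : rs <= ra by rewrite ge_min lexx.
have rs4 : rs <= rho4 by rewrite !ge_min lexx ?orbT.
have [c [hc c0 E]] := mvt_near (fun t t0 => Hder y t sy t0) a0 b0 ha hb.
have Pc : Psi_t Psi y c != 0.
  by apply/eqP => P0; have := Hs y c sy c0; rewrite P0 mulr0 ltxx.
have [kap [hk Ek]] := ln_kappa a0 b0 (Hrho4 _ (lt_le_trans ha rs4)) (Hrho4 _ (lt_le_trans hb rs4)).
have en0 : e != 0 by rewrite -normr_gt0.
have ba_eq : b - a = e * g y / Psi_t Psi y c.
  have : Psi_t Psi y c * (b - a) = e * g y.
    by rewrite -E /b Heq // /a addrAC subrr add0r.
  by move=> <-; rewrite mulrAC divff // mul1r.
have DE : Dq fe f e y = kap * (g y * (Psi_t Psi y c)^-1).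
  by rewrite /Dq -/a -/b Ek ba_eq; field; apply/andP; split.
have LE : g x / (f x * Psi_t Psi x (f x)) = t1^-1 * (g x * P1^-1).
  by rewrite -/t1 -/P1 invfM; ring.
rewrite DE LE; apply: ltW; apply: Hrho1 => //.
apply: Hrho2; first exact: Hg.
apply: Hrho3; apply: Ha => //.
exact: lt_le_trans hc rsa.
Qed.

End Analytic.
Theorem lemma3p3 (R : realType) (n : nat) (Omega : set 'rV[R]_n)
  (Psi : 'rV[R]_n -> R -> R) (f g : 'rV[R]_n -> R) (fe : R -> 'rV[R]_n -> R) :
  (2 <= n)%N ->
  closed Omega -> Omega `<=` @sphere R n ->
  ~ (exists u, @sphere R n u /\ Omega `<=` hemisphere u) ->
  in_C_I Psi \/ in_C_d Psi ->
  in_Cpos Omega f -> in_Cont Omega g ->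
  (exists delta : R, 0 < delta /\
     forall e : R, `|e| < delta ->
       in_Cpos Omega (fe e) /\
       forall xi, Omega xi -> Psi xi (fe e xi) = Psi xi (f xi) + e * g xi) ->
  (* (i) *)
  (forall v u0 : 'rV[R]_n,
     @sphere R n v -> ~ eta_set (chull Omega f) v ->
     alpha (polar (chull Omega f)) v u0 ->
     (fun e => (ln (supp_fun (chull Omega (fe e)) v)
                - ln (supp_fun (chull Omega f) v)) / e) @ 0^'
       --> g u0 / (f u0 * Psi_t Psi u0 (f u0)))
  /\
  (* (ii) *)
  (forall xi u1 : 'rV[R]_n,
     @sphere R n xi -> ~ eta_set (chull Omega (fun x => (f x)^-1)) xi ->
     alpha (wulff Omega f) xi u1 ->
     (fun e => (ln (radial_fun (wulff Omega (fe e)) xi)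
                - ln (radial_fun (wulff Omega f) xi)) / e) @ 0^'
       --> g u1 / (f u1 * Psi_t Psi u1 (f u1))).
Proof.
move=> _ clO Os NH HPsi [cf fpos] cg Hfe.
have cpt : compact Omega := subclosed_compact clO (@sphere_compact R n) Os.
have JL := analytic Os HPsi (conj cf fpos) cg Hfe.
set L := fun x => g x / (f x * Psi_t Psi x (f x)).
have [d0 [d00 Hd0]] := Hfe.
have fepos : near0 (fun e => forall y, Omega y -> 0 < fe e y).
  exists d0; split => // e /andP[_ ed] y Oy.
  by have [[_ H] _] := Hd0 e ed; exact: H.
split.
- move=> v u0 sv Neta Hal.
  have [Ou0 h0pos uniq] := ident cpt Os NH cf fpos sv Neta Hal.
  set h0 := f u0 * dotv u0 v.
  have Fle : forall y, Omega y -> f y * dotv y v <= h0.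
    move=> y Oy; have [->|ne] := eqVneq y u0; first exact: lexx.
    by apply: ltW; apply: uniq => //; apply/eqP.
  have hK : supp_fun (chull Omega f) v = h0.
    by apply/le_anti/andP; split; [exact: (supp_le Ou0 Fle) | exact: (supp_ge Ou0 Fle)].
  have C := core cpt cf fpos fepos Ou0 h0pos uniq JL.
  apply: lim_eps => eps eps0.
  have [del [del0 Hdel]] := C eps eps0.
  exists del; split => // e He.
  have [Hup Hlo] := Hdel e He.
  have e0 : e != 0 by rewrite -normr_gt0; case/andP: He.
  rewrite hK; apply: ln_ratio => //.
  + apply: lt_le_trans (_ : h0 * expR (e * L u0 - `|e| * eps) <= _).
      by rewrite mulr_gt0 ?expR_gt0.
    apply: le_trans Hlo _; exact: (supp_ge Ou0 Hup).
  + apply: le_trans Hlo _; exact: (supp_ge Ou0 Hup).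
  + exact: (supp_le Ou0 Hup).
- move=> xi u1 sxi Neta Hal.
  set h' := fun x => (f x)^-1.
  have ch' : {within Omega, continuous h'}.
    by apply: cont_within_inv => // x Ox; rewrite gt_eqF ?fpos.
  have hpos' : forall x, Omega x -> 0 < h' x by move=> x Ox; rewrite invr_gt0 fpos.
  rewrite (wulff_polar fpos) in Hal.
  have [Ou1 h0pos uniq] := ident cpt Os NH ch' hpos' sxi Neta Hal.
  set h0 := h' u1 * dotv u1 xi.
  have Fle : forall y, Omega y -> h' y * dotv y xi <= h0.
    move=> y Oy; have [->|ne] := eqVneq y u1; first exact: lexx.
    by apply: ltW; apply: uniq => //; apply/eqP.
  set he := fun e x => (fe e x)^-1.
  have hepos : near0 (fun e => forall y, Omega y -> 0 < he e y).
    have [d [d0' Hd]] := fepos; exists d; split => // e He y Oy.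
    by rewrite invr_gt0; exact: Hd.
  set L' := fun x => - L x.
  have JL' : forall x, Omega x -> forall eps : R, 0 < eps ->
      nearJ Omega x (fun e y => `|Dq he h' e y - L' x| <= eps).
    move=> x Ox eps eps0.
    have [d [d0' [del [del0 Hd]]]] := JL x Ox eps eps0.
    exists d; split => //; exists (Num.min del d0); split; first by rewrite lt_min del0 d00.
    move=> y Oy bxy e /andP[e0]; rewrite lt_min => /andP[edel ed0].
    have fey : 0 < fe e y by have [[_ H] _] := Hd0 e ed0; exact: H.
    have := Hd y Oy bxy e; rewrite e0 edel => /(_ isT).
    rewrite /Dq /he /h' /L' !lnV ?posrE ?fpos //.
    have -> : (- ln (fe e y) - - ln (f y)) / e - - L x =
              - ((ln (fe e y) - ln (f y)) / e - L x) by ring.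
    by rewrite normrN.
  have C := core cpt ch' hpos' hepos Ou1 h0pos uniq JL'.
  have rho0 : radial_fun (wulff Omega f) xi = h0^-1.
    rewrite (wulff_polar fpos).
    have := radial_polar_bounds h0pos Ou1 (lexx _) Fle.
    by move=> /andP[a b]; apply/le_anti/andP; split.
  apply: lim_eps => eps eps0.
  have [del [del0 Hdel]] := C eps eps0.
  exists (Num.min del d0); split; first by rewrite lt_min del0 d00.
  move=> e /andP[e0']; rewrite lt_min => /andP[edel ed0].
  have He : 0 < `|e| < del by rewrite e0' edel.
  have [Hup Hlo] := Hdel e He.
  have e0 : e != 0 by rewrite -normr_gt0.
  have fep : forall x, Omega x -> 0 < fe e x by have [[_ H] _] := Hd0 e ed0.
  set b := h0 * expR (e * L' u1 - `|e| * eps).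
  set B := h0 * expR (e * L' u1 + `|e| * eps).
  have b0 : 0 < b by rewrite mulr_gt0 ?expR_gt0.
  have rb := radial_polar_bounds b0 Ou1 Hlo Hup.
  rewrite -(wulff_polar fep) in rb.
  set r := radial_fun (wulff Omega (fe e)) xi.
  move: rb; rewrite -/r => /andP[rB rb].
  have B0 : 0 < B by rewrite mulr_gt0 ?expR_gt0.
  have r0 : 0 < r by apply: lt_le_trans rB; rewrite invr_gt0.
  have lr : ln r = - ln r^-1 by rewrite lnV ?posrE // opprK.
  rewrite rho0 (@lnV _ h0) ?posrE // lr.
  have -> : (- ln r^-1 - - ln h0) / e - L u1 = - ((ln r^-1 - ln h0) / e - L' u1).
    by rewrite /L'; ring.
  have Hb : b <= r^-1 by rewrite -[b]invrK lef_pV2 ?posrE ?invr_gt0.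
  have HB : r^-1 <= B by rewrite -[B]invrK lef_pV2 ?posrE ?invr_gt0.
  rewrite normrN; apply: ln_ratio => //.
  by rewrite invr_gt0.
Qed.
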